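(* Let $\mathcal{I}$ be a finite set of closed intervals whose $2|\mathcal{I}|$ start- and endpoints are pairwise distinct, let $k\ge 1$, and let $X$ (the set of intervals of $\mathcal{I}$ together with all virtual elements) and $\mathcal{S}$ be produced by the construction described in the context. If $\chi:X\to\{1,\dots,k\}$ is a coloring such that, for every constraint $S\in\mathcal{S}$, any two distinct elements of $S$ receive distinct colors, then the restriction of $\chi$ to $\mathcal{I}$ is a balanced $k$-coloring of $\mathcal{I}$.
   Context: For a finite set $\mathcal{I}$ of closed intervals, a $k$-coloring is a map $\chi:\mathcal{I}\to\{1,\dots,k\}$; with $c_i(x)$ the number of intervals containing $x$ of color $i$, the coloring is balanced if $\max_{x\in\mathbb{R}}\max_{i,j}|c_i(x)-c_j(x)|\le 1$. Construction. The events are the start- and endpoints of the intervals, scanned in increasing order. We maintain a list of active events (initially empty), a growing ground set $X$ (initially $\mathcal{I}$) and a family $\mathcal{S}$ of constraints (subsets/tuples of $X$, initially empty). Whenever the active list is empty, the type of the next event (start or end) fixes the type of the current phase. Start phase: startpoints are appended to the active list. (a) If the active list contains startpoints of $k$ elements $I_1,\dots,I_k$ (actual intervals or virtual elements), add the constraint $(I_1,\dots,I_k)$ to $\mathcal{S}$ and clear the active list. (b) If the active list contains startpoints of $I_1,\dots,I_j$ with $j<k$ and the next event is the endpoint of some interval $I_{j+1}$, create new virtual elements $x_{j+1},\dots,x_k,y_1,\dots,y_{j-1}$ (added to $X$, not used before), add the two constraints $(I_1,\dots,I_j,x_{j+1},\dots,x_k)$ and $(y_1,\dots,y_{j-1},I_{j+1},x_{j+1},\dots,x_k)$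 to $\mathcal{S}$, and replace the active list by the (virtual) startpoints of $y_1,\dots,y_{j-1}$ (the phase remains a start phase; if $j=1$ the list becomes empty). End phase: symmetric, with the roles of start- and endpoints interchanged (endpoints are accumulated; $k$ accumulated endpoints yield one constraint and clear the list; encountering a startpoint of an interval $I_{j+1}$ after $j<k$ accumulated endpoints yields the two analogous constraints with fresh virtual elements and the list is replaced by virtual endpoints of $y_1,\dots,y_{j-1}$). *)

(* Defs.v *)
From HB Require Import structures.
From mathcomp Require Import all_boot all_order all_algebra.
Set Implicit Arguments. Unset Strict Implicit. Unset Printing Implicit Defensive.
Import Order.TTheory GRing.Theory Num.Theory.

(* A family of n closed intervals [ (I i).1, (I i).2 ], indexed by 'I_n.
   Elements of the ground set X: actual intervals (inl i) or virtual
   elements (inr m), m a natural-number name. *)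
Definition Elem (n : nat) := ('I_n + nat)%type.

(* An event: the startpoint (true) or endpoint (false) of interval i. *)
Definition event (n : nat) := ('I_n * bool)%type.

Definition events (n : nat) : seq (event n) :=
  [seq (i, b) | i <- enum 'I_n, b <- [:: true; false]].

Section Construction.
Variables (R : realFieldType) (n : nat) (I : 'I_n -> R * R).

Definition evpos (e : event n) : R := if e.2 then (I e.1).1 else (I e.1).2.

Definition sorted_events : seq (event n) :=
  sort (fun e f : event n => (evpos e <= evpos f)%R) (events n).

End Construction.

(* State of the scan: (phase type (true = start phase, false = end phase),
   active list, next fresh virtual name, constraints produced so far). *)
Definition cstate (n : nat) :=
  (bool * seq (Elem n) * nat * seq (seq (Elem n)))%type.

Definition step (n k : nat) (st : cstate n) (ev : Elem n * bool) : cstate n :=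
  let '(ph0, act, fr, Ss) := st in
  let '(x, b) := ev in
  let ph := if nilp act then b else ph0 in
  if b == ph then
    let act' := rcons act x in
    if size act' == k then (ph, [::], fr, rcons Ss act')
    else (ph, act', fr, Ss)
  else
    let j := size act in
    let xs := [seq (inr (fr + m) : Elem n) | m <- iota 0 (k - j)] in
    let ys := [seq (inr (fr + (k - j) + m) : Elem n) | m <- iota 0 j.-1] in
    (ph, ys, fr + (k - j) + j.-1, Ss ++ [:: act ++ xs; ys ++ x :: xs]).

Definition constraints (R : realFieldType) (n k : nat) (I : 'I_n -> R * R)
  : seq (seq (Elem n)) :=
  (foldl (@step n k) (true, [::], 0%N, [::])
     [seq (inl e.1 : Elem n, e.2) | e <- sorted_events I]).2.

Definition color_count (R : realFieldType) (n k : nat) (I : 'I_n -> R * R)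
  (col : 'I_n -> 'I_k) (c : 'I_k) (x : R) : nat :=
  #|[set j : 'I_n | ((I j).1 <= x <= (I j).2)%R && (col j == c)]|.

Definition balanced (R : realFieldType) (n k : nat) (I : 'I_n -> R * R)
  (col : 'I_n -> 'I_k) : Prop :=
  forall (x : R) (c c' : 'I_k),
    (`| (color_count I col c x)%:Z - (color_count I col c' x)%:Z | <= 1)%R.

(* Main.v *)
Require Import Defs.
From HB Require Import structures.
From mathcomp Require Import all_boot all_order all_algebra.
From mathcomp Require Import zify.
Import Order.TTheory GRing.Theory Num.Theory.
Set Implicit Arguments. Unset Strict Implicit. Unset Printing Implicit Defensive.

Lemma step_S_sub n k (st : cstate n) e : {subset st.2 <= (step k st e).2}.
Proof.
case: st => [[[ph0 act] fr] Ss]; case: e => x b; rewrite /step /=.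
case: ifP => _; [case: ifP => _ |] => /= C HC;
  by rewrite ?mem_rcons ?mem_cat ?in_cons HC ?orbT.
Qed.

Lemma fold_S_sub n k (st : cstate n) s : {subset st.2 <= (foldl (step k) st s).2}.
Proof. elim: s st => [|e s IH] st //= C HC; apply: IH; exact: step_S_sub. Qed.

Lemma step_fut n k (st : cstate n) e :
  (exists r, (step k st e).1.1.2 = st.1.1.2 ++ r) \/
  (exists C, C \in (step k st e).2 /\ exists r, C = st.1.1.2 ++ r).
Proof.
case: st => [[[ph0 act] fr] Ss]; case: e => x b; rewrite /step /=.
case: ifP => _.
- case: ifP => _ /=.
  + right; exists (rcons act x); rewrite mem_rcons mem_head; split=>//.
    by exists [:: x]; rewrite cats1.
  + by left; exists [:: x]; rewrite cats1.
- right; exists (act ++ [seq (inr (fr + m) : Elem n) | m <- iota 0 (k - size act)]).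
  split; last by eexists.
  by rewrite mem_cat !inE eqxx orbT.
Qed.

Lemma fold_fut n k (st : cstate n) s :
  (exists r, (foldl (step k) st s).1.1.2 = st.1.1.2 ++ r) \/
  (exists C, C \in (foldl (step k) st s).2 /\ exists r, C = st.1.1.2 ++ r).
Proof.
elim: s st => [|e s IH] st /=; first by left; exists [::]; rewrite cats0.
case: (step_fut k st e) => [[r Hr]|[C [HC [r Hr]]]].
- case: (IH (step k st e)) => [[r' Hr']|[C [HC [r' Hr']]]].
  + by left; exists (r ++ r'); rewrite Hr' Hr catA.
  + by right; exists C; split => //; exists (r ++ r'); rewrite Hr' Hr catA.
- by right; exists C; split; [exact: fold_S_sub | exists r].
Qed.

Definition Inv n k (st : cstate n) (p : seq (Elem n * bool)) : Prop :=
  let '(ph, act, fr, Ss) := st in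
  [/\ forall C, C \in Ss -> uniq C /\ size C = k,
      uniq act, (size act < k)%N,
      forall m, inr m \in act -> (m < fr)%N &
      forall i, inl i \in act -> (inl i, ph) \in p].

Lemma mem_virt n a l (y : Elem n) :
  (y \in [seq (inr (a + m) : Elem n) | m <- iota 0 l]) =
  (if y is inr m then (a <= m < a + l)%N else false).
Proof.
case: y => [i|m].
- by apply/negbTE/mapP => -[].
- apply/mapP/idP => [[m' Hm [->]]|H].
  + by move: Hm; rewrite mem_iota; lia.
  + exists (m - a); first by rewrite mem_iota; lia.
    congr inr; lia.
Qed.

Lemma uniq_virt n a l : uniq [seq (inr (a + m) : Elem n) | m <- iota 0 l].
Proof. by rewrite map_inj_uniq ?iota_uniq // => u v [] /addnI. Qed.


Lemma step_Inv n k (st : cstate n) p (i0 : 'I_n) b :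
  Inv k st p -> (inl i0, b) \notin p ->
  Inv k (step k st (inl i0, b)) (rcons p (inl i0, b)).
Proof.
case: st => [[[ph0 act] fr] Ss] [HS Hu Hsz Hfr Hin] Hnot; rewrite /step /=.
set ph := (if nilp act then b else ph0).
have Hph : ~~ nilp act -> ph = ph0 by rewrite /ph => /negbTE ->.
have notin : b = ph -> inl i0 \notin act.
  move=> Hb; apply/negP => Hi.
  have Hne : ~~ nilp act by case: (act) Hi.
  move: (Hin _ Hi); rewrite -(Hph Hne) -Hb => H; by rewrite H in Hnot.
case: ifP => /eqP Hb.
- have Hu' : uniq (rcons act (inl i0)) by rewrite rcons_uniq notin.
  case: ifP => /eqP Hk' /=.
  + split => //.
    * move=> C; rewrite mem_rcons inE => /orP [/eqP ->|/HS //]; by split.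
    * lia.
  + split => //.
    * by rewrite size_rcons; move: Hk'; rewrite size_rcons; lia.
    * by move=> m; rewrite mem_rcons inE => /Hfr.
    * move=> i; rewrite mem_rcons inE mem_rcons inE => /orP [/eqP [->]|Hi].
        by rewrite -Hb eqxx.
      have Hne : ~~ nilp act by case: (act) Hi.
      by rewrite (Hph Hne) (Hin _ Hi) orbT.
- have Hne : ~~ nilp act by move: Hb; rewrite /ph; case: (nilp act).
  have Hj : (0 < size act)%N by case: (act) Hne.
  split.
  + move=> C; rewrite mem_cat !inE => /orP [/HS //|/orP [/eqP ->|/eqP ->]].
    * split; last by rewrite size_cat size_map size_iota subnKC // ltnW.
      rewrite cat_uniq Hu uniq_virt andbT /=.
      apply/hasPn => y; rewrite mem_virt; case: y => // m Hm /=.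
      case/andP: Hm => H1 _; apply/negP => /Hfr; by rewrite ltnNge H1.
    * split; last by rewrite size_cat /= !size_map !size_iota; lia.
      rewrite cat_uniq /= !uniq_virt !mem_virt /= ?andbT.
      apply/hasPn => y; rewrite mem_virt mem_virt; case: y => // m /=.
      by move=> /andP[_ H2]; rewrite leqNgt H2.
  + exact: uniq_virt.
  + by rewrite size_map size_iota; lia.
  + by move=> m; rewrite mem_virt; lia.
  + by move=> i; rewrite mem_virt.
Qed.

Local Open Scope ring_scope.

Definition sgn (b : bool) : int := if b then 1 else -1.
Definition wc n k (chi : Elem n -> 'I_k) (c : 'I_k) (e : Elem n * bool) : int :=
  if chi e.1 == c then sgn e.2 else 0.
Definition Dc n k (chi : Elem n -> 'I_k) c (p : seq (Elem n * bool)) : int :=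
  \sum_(e <- p) wc chi c e.
Definition cnt n k (chi : Elem n -> 'I_k) c (s : seq (Elem n)) : nat :=
  count (fun y => chi y == c) s.
Definition DInv n k (chi : Elem n -> 'I_k) (st : cstate n) p : Prop :=
  let '(ph, act, fr, Ss) := st in
  exists base : int, forall c, Dc chi c p = base + sgn ph * (cnt chi c act)%:Z.
Definition Good n k (chi : Elem n -> 'I_k) (C : seq (Elem n)) := forall c, cnt chi c C = 1%N.

Lemma Dc_rcons n k (chi : Elem n -> 'I_k) c p e : Dc chi c (rcons p e) = Dc chi c p + wc chi c e.
Proof. by rewrite /Dc -cats1 big_cat big_seq1. Qed.

Lemma cnt_rcons n k (chi : Elem n -> 'I_k) c s x :
  cnt chi c (rcons s x) = (cnt chi c s + (chi x == c))%N.
Proof. by rewrite /cnt -cats1 count_cat /= addn0. Qed.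

Lemma cnt_cat n k (chi : Elem n -> 'I_k) c s t :
  cnt chi c (s ++ t) = (cnt chi c s + cnt chi c t)%N.
Proof. by rewrite /cnt count_cat. Qed.

Lemma step_DInv n k (chi : Elem n -> 'I_k) (st : cstate n) p x b :
  DInv chi st p -> (forall C, C \in (step k st (x,b)).2 -> Good chi C) ->
  DInv chi (step k st (x,b)) (rcons p (x,b)).
Proof.
case: st => [[[ph0 act] fr] Ss] [base Hbase] HG; move: HG; rewrite /step /=.
set ph := (if nilp act then b else ph0).
have Hph : forall c, sgn ph0 * (cnt chi c act)%:Z = sgn ph * (cnt chi c act)%:Z.
  move=> c; rewrite /ph; case: (act) => //=; by rewrite /cnt /= !mulr0.
case: ifP => /eqP Hb.
- case: ifP => _ /= HG.
  + have G : Good chi (rcons act x) by apply: HG; rewrite mem_rcons mem_head.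
    exists (base + sgn ph) => c.
    rewrite Dc_rcons Hbase Hph /wc /= -Hb.
    have := G c; rewrite cnt_rcons /cnt /= mulr0 addr0.
    set q := count _ act.
    case: (chi x == c) => /= H.
      have -> : q = 0%N by move: H; rewrite addn1 => -[].
      by rewrite (_ : Posz 0 = 0) // mulr0 addr0.
    have -> : q = 1%N by move: H; rewrite addn0.
    by rewrite mulr1 addr0.
  + exists base => c.
    rewrite Dc_rcons Hbase Hph cnt_rcons /wc /= -Hb.
    case: (chi x == c) => /=; last by rewrite addn0 addr0.
    by rewrite PoszD mulrDr addrA mulr1.
- move=> HG; exists base => c.
  have G1 : Good chi (act ++ [seq (inr (fr + m)%N : Elem n) | m <- iota 0 (k - size act)]).
    by apply: HG; rewrite mem_cat !inE eqxx orbT.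
  have G2 : Good chi ([seq (inr (fr + (k - size act) + m)%N : Elem n) | m <- iota 0 (size act).-1] ++ x ::
                  [seq (inr (fr + m)%N : Elem n) | m <- iota 0 (k - size act)]).
    by apply: HG; rewrite mem_cat !inE eqxx !orbT.
  move: (G1 c) (G2 c) => {G1 G2} G1 G2.
  have Hne : ~~ nilp act by move: Hb; rewrite /ph; case: (nilp act).
  have E : ph = ph0 by rewrite /ph (negbTE Hne).
  move: G1 G2; rewrite Dc_rcons Hbase /wc /= !cnt_cat /cnt /= -E.
  case: (chi x == c); case: (ph) Hb; case: (b) => // _ /= H1 H2.
  all: move: H1 H2; set a := count _ act; set y := count _ [seq _ | m <- iota 0 (size act).-1];
       set z := count _ [seq _ | m <- iota 0 (k - size act)] => H1 H2.
  all: lia.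
Qed.

Local Open Scope ring_scope.

Lemma fold_Inv n k s (st : cstate n) p :
  Inv k st p -> uniq (p ++ s) ->
  all (fun e : Elem n * bool => if e.1 is inl _ then true else false) s ->
  Inv k (foldl (step k) st s) (p ++ s).
Proof.
elim: s st p => [|[x b] s IH] st p; first by rewrite cats0.
rewrite /= => HI Hu /andP [Hx Ha].
case: x Hx Hu => // i _ Hu.
rewrite -cat_rcons; apply: IH => //; last by rewrite cat_rcons.
apply: step_Inv => //.
by move: Hu; rewrite cat_uniq /= => /and3P [_ /norP [H _] _].
Qed.

Lemma fold_DInv n k (chi : Elem n -> 'I_k) s (st : cstate n) p :
  DInv chi st p -> (forall C, C \in (foldl (step k) st s).2 -> Good chi C) ->
  DInv chi (foldl (step k) st s) (p ++ s).
Proof.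
elim: s st p => [|e s IH] st p; first by rewrite cats0.
case: e => x b /= HD HG; rewrite -cat_rcons; apply: IH => //.
apply: step_DInv => // C HC; apply: HG; exact: fold_S_sub.
Qed.

Lemma take_count_filter (T : eqType) (P : pred T) (s : seq T) :
  sorted (fun e f => P f ==> P e) s -> take (count P s) s = filter P s.
Proof.
elim: s => [|a s IH] //= Hs.
have Hs' := path_sorted Hs.
have Htr : transitive (fun e f => P f ==> P e).
  by move=> y x z; case: (P x); case: (P y); case: (P z).
have Ha := order_path_min Htr Hs.
case Pa: (P a) => /=; first by rewrite IH.
rewrite add0n.
have H0 : ~~ has P s.
  apply/hasPn => f Hf; move/allP: Ha => /(_ f Hf); by rewrite Pa; case: (P f).
have -> : count P s = 0%N by move: H0; rewrite has_count; case: (count P s).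
move: H0; rewrite has_filter negbK => /eqP -> //.
Qed.

Lemma Good_of n k (chi : Elem n -> 'I_k) (C : seq (Elem n)) :
  uniq C -> size C = k ->
  (forall x y, x \in C -> y \in C -> x != y -> chi x != chi y) -> Good chi C.
Proof.
move=> Hu Hs Hd c.
have -> : cnt chi c C = count (pred1 c) (map chi C) by rewrite count_map.
have Hmu : uniq (map chi C).
  rewrite map_inj_in_uniq // => x y Hx Hy Hxy; apply/eqP; apply/negPn/negP => H.
  by move: (Hd x y Hx Hy H); rewrite Hxy eqxx.
rewrite (count_uniq_mem _ Hmu).
have Hc : #|map chi C| = #|'I_k| by move/card_uniqP: (Hmu) => ->; rewrite size_map Hs card_ord.
have /subset_cardP := Hc.
move=> /(_ (subset_predT _)) H; by rewrite H.
Qed.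

Local Open Scope ring_scope.

Lemma sumZ (T : Type) (s : seq T) (F : T -> nat) :
  ((\sum_(i <- s) F i)%N)%:Z = \sum_(i <- s) (F i)%:Z.
Proof. elim: s => [|a s IH]; by rewrite ?big_nil // !big_cons PoszD IH. Qed.

Lemma sum_events n (F : event n -> int) :
  \sum_(e <- events n) F e = \sum_(i <- enum 'I_n) (F (i,true) + F (i,false)).
Proof. rewrite /events big_allpairs; apply: eq_bigr => i _; rewrite !big_cons big_nil /=; by rewrite addr0. Qed.

Lemma Inv_S n k (st : cstate n) p : Inv k st p -> forall C, C \in st.2 -> uniq C /\ size C = k.
Proof. by case: st => [[[? ?] ?] ?] []. Qed.
Lemma Inv_sz n k (st : cstate n) p : Inv k st p -> (size st.1.1.2 < k)%N.
Proof. by case: st => [[[? ?] ?] ?] []. Qed.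
Lemma DInv_eq n k (chi : Elem n -> 'I_k) (st : cstate n) p : DInv chi st p ->
  exists base, forall c, Dc chi c p = base + sgn st.1.1.1 * (cnt chi c st.1.1.2)%:Z.
Proof. by case: st => [[[? ?] ?] ?]. Qed.

Theorem lemma3 (R : realFieldType) (n k : nat) (I : 'I_n -> R * R)
  (Hint : forall i : 'I_n, ((I i).1 <= (I i).2)%R)
  (Hdistinct : uniq [seq evpos I e | e <- events n])
  (Hk : (0 < k)%N)
  (chi : Elem n -> 'I_k)
  (Hchi : forall C, C \in constraints k I ->
            forall x y, x \in C -> y \in C -> x != y -> chi x != chi y) :
  balanced I (fun i => chi (inl i)).
Proof.
set evs := sorted_events I.
set L := [seq (inl e.1 : Elem n, e.2) | e <- evs].
set init : cstate n := (true, [::], 0%N, [::]).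
set fin := foldl (step k) init L.
have Hperm : perm_eq evs (events n) by rewrite /evs /sorted_events perm_sort.
have Hue : uniq (events n) := map_uniq Hdistinct.
have Huevs : uniq evs by rewrite (perm_uniq Hperm).
have HuL : uniq L by rewrite map_inj_uniq // => [[i b] [j b']] /= [-> ->].
have HrL : all (fun e : Elem n * bool => if e.1 is inl _ then true else false) L.
  by apply/allP => e /mapP [e' _ ->].
have HinvF : Inv k fin L by apply: (fold_Inv (p:=[::])) => //; split.
have HGood : forall C, C \in fin.2 -> Good chi C.
  move=> C HC; have [Hu Hs] := Inv_S HinvF HC.
  exact: (Good_of Hu Hs (Hchi C HC)).
have HD : forall t, DInv chi (foldl (step k) init (take t L)) (take t L).
  move=> t; apply: (fold_DInv (p:=[::])).
    by exists 0 => c; rewrite /Dc big_nil /cnt /= mulr0 addr0.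
  move=> C HC; apply: HGood; rewrite /fin -(cat_take_drop t L) foldl_cat.
  exact: fold_S_sub.
have HL0 : forall c, Dc chi c L = 0.
  move=> c; rewrite /Dc big_map (perm_big _ Hperm) sum_events big1 // => i _.
  by rewrite /wc /=; case: ifP => _; rewrite ?addr0 // /sgn addrN.
have Hfin0 : fin.1.1.2 = [::].
  have := HD (size L); rewrite take_size -/fin => /DInv_eq [base Hb].
  have Hsz := Inv_sz HinvF.
  move: Hsz Hb; case: (fin.1.1.2) => [//|a r] Hsz Hb; exfalso.
  have [c1 Hc1] : exists c1, c1 \notin map chi (a :: r).
    case: (pickP (predC (mem (map chi (a::r))))) => [c1 Hc1|H]; first by exists c1.
    have : (#|'I_k| <= #|map chi (a :: r)|)%N.
      apply: subset_leq_card; apply/subsetP => c _; move: (H c) => /= /negbFE //.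
    move: (card_size (map chi (a :: r))); rewrite size_map card_ord => H1 H2.
    by move: (leq_trans H2 H1); rewrite leqNgt Hsz.
  have e1 : cnt chi c1 (a :: r) = 0%N.
    have -> : cnt chi c1 (a :: r) = count (pred1 c1) (map chi (a :: r)) by rewrite count_map.
    exact/count_memPn.
  have e2 : (0 < cnt chi (chi a) (a :: r))%N by rewrite /cnt /= eqxx.
  move: (Hb c1) (Hb (chi a)); rewrite !HL0 e1.
  move: e2; set q := cnt chi (chi a) (a :: r); case: (fin.1.1.1) => /=; lia.
have Hcnt1 : forall t c, (cnt chi c (foldl (step k) init (take t L)).1.1.2 <= 1)%N.
  move=> t c; have := fold_fut k (foldl (step k) init (take t L)) (drop t L).
  rewrite -foldl_cat cat_take_drop -/fin Hfin0.
  set act := (foldl (step k) init (take t L)).1.1.2.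
  case=> [[r Hr]|[C [HC [r HCr]]]].
    by have -> : act = [::] by case: (act) Hr.
  by have := HGood _ HC c; rewrite HCr cnt_cat; lia.
move=> x c c'.
set P := fun e : event n => if e.2 then evpos I e <= x else evpos I e < x.
have Hsorted : sorted (fun e f => P f ==> P e) evs.
  have H1 : sorted (fun e f : event n => evpos I e <= evpos I f) evs.
    by apply: sort_sorted => e f; exact: le_total.
  have H2 : sorted <%R (map (evpos I) evs).
    rewrite lt_sorted_uniq_le sorted_map H1 andbT.
    by rewrite (perm_uniq (perm_map _ Hperm)).
  move: H2; rewrite sorted_map; apply: sub_sorted => e f /= Hef.
  rewrite /P; apply/implyP; case: (f.2); case: (e.2) => /= Hf.
  - exact: ltW (lt_le_trans Hef Hf).
  - exact: lt_le_trans Hef Hf.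
  - exact: ltW (lt_trans Hef Hf).
  - exact: lt_trans Hef Hf.
set t := count P evs.
have Htake : take t evs = filter P evs by apply: take_count_filter.
have HCC : forall c, (color_count I (fun i => chi (inl i)) c x)%:Z = Dc chi c (take t L).
  move=> c0.
  rewrite /L -map_take Htake /Dc big_map big_filter (perm_big _ Hperm) /= big_mkcond sum_events.
  rewrite /color_count -sum1dep_card big_mkcond sumZ big_enum /=.
  apply: eq_big => [i|i _]; first by [].
  rewrite /P /evpos /wc /=.
  have Hi := Hint i.
  case: (chi (inl i) == c0); case: (leP (I i).1 x) => H1; case: (ltP (I i).2 x) => H2 /=.
  all: try by rewrite ?subrr ?addr0.
  by have := lt_trans (le_lt_trans Hi H2) H1; rewrite ltxx.
have [base Hb] := DInv_eq (HD t).
rewrite !HCC !Hb.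
move: (Hcnt1 t c) (Hcnt1 t c').
set a := cnt chi c _; set b := cnt chi c' _.
case: ((foldl (step k) init (take t L)).1.1.1) => /=; lia.
Qed.
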